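(* Let $p>1$, $p'=\frac{p}{p-1}$, $\alpha\in[0,1]$, and let $\psi_R,\psi_R^*,P(R)$ be as in the context. Let $\delta>0$, $C_0>0$, $R_1>0$, $\theta\geq0$, $T>R_1$, and let $0\leq w\in L^1_{\rm loc}([0,T);L^1(\mathcal{C}_\Sigma))$. Assume that for every $R\in[R_1,T)$, \[ \delta+\iint_{P(R)}w(x,t)\psi_R(x,t)\,dx\,dt\leq C_0R^{-\frac{\theta}{p'}}\left(\iint_{P(R)}w(x,t)\psi_R^*(x,t)\,dx\,dt\right)^{\frac1p}. \] Then \[ T\leq \begin{cases} \left(R_1^{(p-1)\theta}+(\log2)C_0^p\theta\delta^{-(p-1)}\right)^{\frac{1}{(p-1)\theta}}, & \text{if }\theta>0,\\[5pt] \exp\left(\log R_1+(\log2)(p-1)^{-1}C_0^p\delta^{-(p-1)}\right), & \text{if }\theta=0. \end{cases} \]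
   Context: $\mathcal{C}_\Sigma\subset\mathbb{R}^N$ is an open set (a cone $\mathrm{int}\{\rho\omega:\rho\ge0,\omega\in\Sigma\}$ with $\Sigma\subset S^{N-1}$ connected open with smooth boundary if $N\ge2$; $(0,\infty)$ or $\mathbb{R}$ if $N=1$). $\langle x\rangle=(1+|x|^2)^{1/2}$. Fix $\eta\in C^\infty([0,\infty))$ with $\eta=1$ on $[0,1/2]$, $\eta$ decreasing on $(1/2,1)$, $\eta=0$ on $[1,\infty)$; set $\eta^*(s)=0$ for $s\in[0,1/2)$ and $\eta^*(s)=\eta(s)$ for $s\geq1/2$. For $R>0$ let $s_R(x,t)=R^{-1}(\langle x\rangle^{2-\alpha}+t)$, $\psi_R(x,t)=[\eta(s_R(x,t))]^{2p'}$, $\psi_R^*(x,t)=[\eta^*(s_R(x,t))]^{2p'}$ for $(x,t)\in\mathcal{C}_\Sigma\times[0,\infty)$, and $P(R)=\{(x,t)\in\mathcal{C}_\Sigma\times[0,\infty):\langle x\rangle^{2-\alpha}+t\leq R\}$. *)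

(* Defs.v *)
From HB Require Import structures.
From mathcomp Require Import all_boot all_order all_algebra.
From mathcomp Require Import all_classical all_reals all_analysis.
Set Implicit Arguments. Unset Strict Implicit. Unset Printing Implicit Defensive.
Import Order.TTheory GRing.Theory Num.Theory.
Import numFieldNormedType.Exports.
Local Open Scope classical_set_scope.
Local Open Scope ring_scope.

Section defs.
Variable R : realType.

(* points of R^N are row vectors 'rV[R]_N (product topology = Euclidean topology) *)
Definition sqnorm (N : nat) (x : 'rV[R]_N) : R := \sum_(i < N) (x 0 i) ^+ 2.

Definition jbr (N : nat) (x : 'rV[R]_N) : R := Num.sqrt (1 + sqnorm x).

Definition unit_sphere (N : nat) : set 'rV[R]_N := [set w | sqnorm w = 1].

(* C is a cone C_Sigma as in the paper (smoothness of the
   boundary of Sigma is not recorded) *)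
Definition cone_domain (N : nat) (C : set 'rV[R]_N) : Prop :=
  if (2 <= N)%N then
    exists Sigma : set 'rV[R]_N,
      [/\ Sigma `<=` unit_sphere (N:=N),
          (exists U : set 'rV[R]_N, open U /\ Sigma = U `&` unit_sphere (N:=N)),
          connected Sigma &
          C = interior [set z | exists rho w, [/\ 0 <= rho, Sigma w & z = rho *: w]]]
  else if N == 1%N then
    C = [set x | forall i, 0 < x 0 i] \/ C = setT
  else False.

(* the fixed cut-off eta (only its values on [0,oo) matter) *)
Definition cutoff (eta : R -> R) : Prop :=
  [/\ (forall n x, 0 <= x -> derivable (derive1n n eta) x 1),
      (forall s, 0 <= s <= 2^-1 -> eta s = 1),
      (forall s t, 2^-1 < s -> s <= t -> t < 1 -> eta t <= eta s) &
      (forall s, 1 <= s -> eta s = 0)].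

Definition eta_star (eta : R -> R) (s : R) : R := if s < 2^-1 then 0 else eta s.

Definition sR (alpha Rr : R) (N : nat) (x : 'rV[R]_N) (t : R) : R :=
  Rr^-1 * ((jbr x) `^ (2 - alpha) + t).

Definition conj_exp (p : R) : R := p / (p - 1).

Definition psiR (eta : R -> R) (p alpha Rr : R) (N : nat) (x : 'rV[R]_N) (t : R) : R :=
  (eta (sR alpha Rr x t)) `^ (2 * conj_exp p).

Definition psiR_star (eta : R -> R) (p alpha Rr : R) (N : nat) (x : 'rV[R]_N) (t : R) : R :=
  (eta_star eta (sR alpha Rr x t)) `^ (2 * conj_exp p).

Definition PR (alpha Rr : R) (N : nat) (C : set 'rV[R]_N) : set ('rV[R]_N * R) :=
  [set z | C z.1 /\ 0 <= z.2 /\ (jbr z.1) `^ (2 - alpha) + z.2 <= Rr].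

Definition tup2row (N : nat) (u : N.-tuple R) : 'rV[R]_N := \row_i tnth u i.

(* N-dimensional Lebesgue integral of a nonnegative function on R^N,
   as the iterated one-dimensional Lebesgue integral (Tonelli) *)
Fixpoint lebN (n : nat) : (n.-tuple R -> \bar R) -> \bar R :=
  match n as m return (m.-tuple R -> \bar R) -> \bar R with
  | 0%N => fun f => f [tuple]
  | m.+1 => fun f => (\int[@lebesgue_measure R]_(x in [set: R])
                        lebN (fun u : m.-tuple R => f [tuple of x :: u]))%E
  end.

Definition iint (N : nat) (D : set ('rV[R]_N * R)) (f : 'rV[R]_N -> R -> R) : \bar R :=
  (\int[@lebesgue_measure R]_(t in [set: R])
     lebN (fun u : N.-tuple R =>
             if (tup2row u, t) \in D then (f (tup2row u) t)%:E else 0%E))%E.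

End defs.

(* Main.v *)
Require Import Defs.
From HB Require Import structures.
From mathcomp Require Import all_boot all_order all_algebra.
From mathcomp Require Import all_classical all_reals all_analysis.
From mathcomp Require Import ring lra.
Import Order.TTheory GRing.Theory Num.Theory.
Import numFieldNormedType.Exports.
Local Open Scope classical_set_scope.
Local Open Scope ring_scope.

Set Implicit Arguments. Unset Strict Implicit. Unset Printing Implicit Defensive.

Local Open Scope classical_set_scope.
Local Open Scope ring_scope.
Local Open Scope ereal_scope.

Section intA.
Context d (T : measurableType d) (R : realType).
Variable mu : {measure set T -> \bar R}.
Import HBNNSimple.

Lemma intA_mono (f g : T -> \bar R) : (forall x, 0 <= f x) -> (forall x, f x <= g x) ->
  \int[mu]_(x in setT) f x <= \int[mu]_(x in setT) g x.
Proof.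
move=> f0 fg; have g0 x : 0 <= g x by exact: le_trans (f0 x) (fg x).
rewrite !ge0_integralTE//; apply: ge_ereal_sup => _ [h /= hf <-].
apply: ereal_sup_ubound; exists h => //= x; exact: le_trans (hf x) (fg x).
Qed.

Lemma intA_ge0 (f : T -> \bar R) : (forall x, 0 <= f x) -> 0 <= \int[mu]_(x in setT) f x.
Proof. by move=> f0; apply: integral_ge0 => x _. Qed.

Lemma intA_scale (k : R) (f : T -> \bar R) : (0 <= k)%R -> (forall x, 0 <= f x) ->
  k%:E * \int[mu]_(x in setT) f x <= \int[mu]_(x in setT) (k%:E * f x).
Proof.
move=> k0 f0; have [->|kn0] := eqVneq k 0%R.
  by rewrite mul0e; apply: intA_ge0 => x; rewrite mul0e.
have kp : (0 < k)%R by rewrite lt0r kn0.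
have kf0 x : 0 <= k%:E * f x by rewrite mule_ge0.
rewrite !ge0_integralTE// -ereal_sup_pZl//; apply: ge_ereal_sup => _ [_ [h /= hf <-] <-].
apply: ereal_sup_ubound; exists (scale_nnsfun h k0) => /=.
  by move=> x; rewrite /= EFinM lee_pmul2l ?lte_fin.
by rewrite sintegralrM.
Qed.

Lemma intA_add (f g : T -> \bar R) : (forall x, 0 <= f x) -> (forall x, 0 <= g x) ->
  \int[mu]_(x in setT) f x + \int[mu]_(x in setT) g x <= \int[mu]_(x in setT) (f x + g x).
Proof.
move=> f0 g0; have fg0 x : 0 <= f x + g x by rewrite adde_ge0.
rewrite !ge0_integralTE//.
set A := [set _ | _ in _]; set B := [set _ | _ in _]; set Cs := [set _ | _ in _].
have key : forall a b, A a -> B b -> a + b <= ereal_sup Cs.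
  move=> _ _ [h1 /= h1f <-] [h2 /= h2g <-]; rewrite -sintegralD.
  apply: ereal_sup_ubound; exists (add_nnsfun h1 h2) => //= x.
  by rewrite EFinD leeD.
have A0 : A 0 by exists nnsfun0; [move=> x /=; exact: f0 | exact: sintegral0].
have B0 : B 0 by exists nnsfun0; [move=> x /=; exact: g0 | exact: sintegral0].
set c := ereal_sup Cs.
have [cy|cfin] := eqVneq c +oo; first by rewrite cy leey.
have c0 : 0 <= c by have := key _ _ A0 B0; rewrite adde0.
have cr : c \is a fin_num by rewrite ge0_fin_numE// ltey.
have Afin a : A a -> a \is a fin_num.
  move=> Aa; have a0 : 0 <= a by case: Aa => h _ <-; exact: sintegral_ge0.
  by rewrite ge0_fin_numE// (le_lt_trans _ (proj2 (andP (elimT (fin_numPlt c) cr))))// -[a]adde0 key.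
have Bfin b : B b -> b \is a fin_num.
  move=> Bb; have b0 : 0 <= b by case: Bb => h _ <-; exact: sintegral_ge0.
  by rewrite ge0_fin_numE// (le_lt_trans _ (proj2 (andP (elimT (fin_numPlt c) cr))))// -[b]add0e key.
have supA : ereal_sup A <= c.
  by apply: ge_ereal_sup => a Aa; have := key _ _ Aa B0; rewrite adde0.
have afin : ereal_sup A \is a fin_num.
  rewrite ge0_fin_numE; first exact: le_lt_trans supA (proj2 (andP (elimT (fin_numPlt c) cr))).
  exact: ereal_sup_ubound A0.
have supB : ereal_sup B <= c - ereal_sup A.
  apply: ge_ereal_sup => b Bb; rewrite leeBrDl//.
  have : ereal_sup A <= c - b.
    by apply: ge_ereal_sup => a Aa; rewrite leeBrDr ?key ?Bfin.
  by rewrite leeBrDr ?Bfin.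
by move: supB; rewrite leeBrDl.
Qed.
End intA.

Local Open Scope classical_set_scope.
Local Open Scope ring_scope.

Local Open Scope ereal_scope.

Section lebN_lemmas.
Variable R : realType.

Lemma lebN_ge0 n (f : n.-tuple R -> \bar R) : (forall u, 0 <= f u) -> 0 <= lebN f.
Proof.
elim: n f => [|n IH] f f0 /=; first exact: f0.
by apply: intA_ge0 => x; apply: IH => u; exact: f0.
Qed.

Lemma lebN_mono n (f g : n.-tuple R -> \bar R) : (forall u, 0 <= f u) ->
  (forall u, f u <= g u) -> lebN f <= lebN g.
Proof.
elim: n f g => [|n IH] f g f0 fg /=; first exact: fg.
apply: intA_mono => x; first by apply: lebN_ge0 => u; exact: f0.
by apply: IH => u; [exact: f0 | exact: fg].
Qed.

Lemma lebN_scale n (k : R) (f : n.-tuple R -> \bar R) : (0 <= k)%R ->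
  (forall u, 0 <= f u) -> k%:E * lebN f <= lebN (fun u => k%:E * f u).
Proof.
elim: n f => [|n IH] f k0 f0 /=; first by [].
apply: le_trans (intA_scale _ _ _) _ => //.
  by move=> x; apply: lebN_ge0 => u; exact: f0.
apply: intA_mono => x.
  by rewrite mule_ge0 //; apply: lebN_ge0 => u; exact: f0.
by apply: IH => // u; exact: f0.
Qed.

Lemma lebN_add n (f g : n.-tuple R -> \bar R) : (forall u, 0 <= f u) ->
  (forall u, 0 <= g u) -> lebN f + lebN g <= lebN (fun u => f u + g u).
Proof.
elim: n f g => [|n IH] f g f0 g0 /=; first by [].
apply: le_trans (intA_add _ _ _) _.
- by move=> x; apply: lebN_ge0 => u; exact: f0.
- by move=> x; apply: lebN_ge0 => u; exact: g0.
apply: intA_mono => x.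
  by rewrite adde_ge0 //; apply: lebN_ge0 => u; [exact: f0|exact: g0].
by apply: IH => u; [exact: f0|exact: g0].
Qed.

Lemma lebN_sum n (I : seq nat) (F : nat -> n.-tuple R -> \bar R) :
  (forall i u, 0 <= F i u) ->
  \sum_(i <- I) lebN (F i) <= lebN (fun u => \sum_(i <- I) F i u).
Proof.
move=> F0; elim: I => [|i I IH].
  by rewrite big_nil; apply: lebN_ge0 => u; rewrite big_nil.
rewrite big_cons.
have -> : (fun u => \sum_(j <- i :: I) F j u) = (fun u => F i u + \sum_(j <- I) F j u).
  by apply: funext => u; rewrite big_cons.
apply: le_trans (lebN_add _ _) => //; last by move=> u; apply: sume_ge0.
by rewrite leeD2l.
Qed.

Definition Iint N (F : N.-tuple R -> R -> \bar R) : \bar R :=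
  \int[@lebesgue_measure R]_(t in [set: R]) lebN (fun u => F u t).

Lemma Iint_ge0 N (F : N.-tuple R -> R -> \bar R) : (forall u t, 0 <= F u t) -> 0 <= Iint F.
Proof. by move=> F0; apply: intA_ge0 => t; apply: lebN_ge0 => u; exact: F0. Qed.

Lemma Iint_mono N (F G : N.-tuple R -> R -> \bar R) : (forall u t, 0 <= F u t) ->
  (forall u t, F u t <= G u t) -> Iint F <= Iint G.
Proof.
move=> F0 FG; apply: intA_mono => t; first by apply: lebN_ge0 => u; exact: F0.
by apply: lebN_mono => u; [exact: F0|exact: FG].
Qed.

Lemma Iint_scale N (k : R) (F : N.-tuple R -> R -> \bar R) : (0 <= k)%R ->
  (forall u t, 0 <= F u t) -> k%:E * Iint F <= Iint (fun u t => k%:E * F u t).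
Proof.
move=> k0 F0; apply: le_trans (intA_scale _ _ _) _ => //.
  by move=> t; apply: lebN_ge0 => u; exact: F0.
apply: intA_mono => t.
  by rewrite mule_ge0 //; apply: lebN_ge0 => u; exact: F0.
by apply: lebN_scale => // u; exact: F0.
Qed.

Lemma Iint_add N (F G : N.-tuple R -> R -> \bar R) : (forall u t, 0 <= F u t) ->
  (forall u t, 0 <= G u t) -> Iint F + Iint G <= Iint (fun u t => F u t + G u t).
Proof.
move=> F0 G0; apply: le_trans (intA_add _ _ _) _.
- by move=> t; apply: lebN_ge0 => u; exact: F0.
- by move=> t; apply: lebN_ge0 => u; exact: G0.
apply: intA_mono => t.
  by rewrite adde_ge0 //; apply: lebN_ge0 => u; [exact: F0|exact: G0].
by apply: lebN_add => u; [exact: F0|exact: G0].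
Qed.

Lemma Iint_sum N (I : seq nat) (F : nat -> N.-tuple R -> R -> \bar R) :
  (forall i u t, i \in I -> 0 <= F i u t) ->
  \sum_(i <- I) Iint (F i) <= Iint (fun u t => \sum_(i <- I) F i u t).
Proof.
elim: I => [|i I IH] F0.
  by rewrite big_nil; apply: Iint_ge0 => u t; rewrite big_nil.
rewrite big_cons.
have -> : (fun u t => \sum_(j <- i :: I) F j u t) = (fun u t => F i u t + \sum_(j <- I) F j u t).
  by apply: funext => u; apply: funext => t; rewrite big_cons.
have F0' : forall j u t, j \in I -> 0 <= F j u t.
  by move=> j u t hj; apply: F0; rewrite inE hj orbT.
apply: le_trans (Iint_add _ _) => //.
- by rewrite leeD2l // IH.
- by move=> u t; apply: F0; rewrite inE eqxx.
- by move=> u t; rewrite big_seq; apply: sume_ge0 => j hj; apply: F0'.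
Qed.

End lebN_lemmas.

Local Close Scope ereal_scope.

Local Open Scope classical_set_scope.
Local Open Scope ring_scope.

Local Open Scope ring_scope.

Section eta_lemmas.
Variable R : realType.
Variable eta : R -> R.
Hypothesis ceta : cutoff eta.

Lemma eta_cont (a : R) : 0 <= a -> eta x @[x --> a] --> eta a.
Proof.
case: ceta => hd _ _ _ a0.
have := hd 0%N a a0; rewrite /derive1n /= => /derivable1_diffP.
exact: differentiable_continuous.
Qed.

Lemma eta_le1 s : 0 <= s -> eta s <= 1.
Proof.
move=> s0; case: ceta => _ h1 hdec h0.
have [sl|sg] := lerP s (2^-1); first by rewrite h1 // s0 sl.
have [s1|s1] := lerP 1 s; first by rewrite h0.
rewrite leNgt; apply/negP => es.
have := eta_cont (a := 2^-1) (ltW (lt_le_trans _ (lexx _))).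
have h2 : (0:R) < 2^-1 by rewrite invr_gt0.
move=> /(_ h2) /cvgr_dist_lt /(_ (eta s - 1)); rewrite subr_gt0 => /(_ es).
move=> /nbhs_ballP [e /= e0 He].
pose t := Num.min s (2^-1 + e / 2).
have ht : 2^-1 < t by rewrite /t lt_min sg /= ltrDl divr_gt0.
have hts : t <= s by rewrite /t ge_min lexx.
have := hdec _ _ ht hts s1.
have : ball (2^-1 : R) e t.
  rewrite /ball /= ltr0_norm ?subr_lt0 // opprB ltrBlDl.
  have : t <= 2^-1 + e / 2 by rewrite /t ge_min lexx orbT.
  move/le_lt_trans; apply.
  by rewrite ltrD2l ltr_pdivrMr // ltr_pMr // ltr1n.
move=> /He; rewrite h1; last by rewrite invr_ge0 ler0n lexx.
move=> hlt hle; move: hlt; rewrite ltr_norml => /andP [hh _]; lra.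
Qed.

Lemma eta_ge0 s : 0 <= s -> 0 <= eta s.
Proof.
move=> s0; case: ceta => _ h1 hdec h0.
have [sl|sg] := lerP s (2^-1); first by rewrite h1 // s0 sl.
have [s1|s1] := lerP 1 s; first by rewrite h0.
rewrite leNgt; apply/negP => es.
have := eta_cont (a := 1) ler01.
move=> /cvgr_dist_lt /(_ (- eta s)); rewrite oppr_gt0 => /(_ es).
move=> /nbhs_ballP [e /= e0 He].
pose t := Num.max s (1 - e / 2).
have ht : t < 1 by rewrite /t gt_max s1 /= gtrBl divr_gt0.
have hts : s <= t by rewrite /t le_max lexx.
have := hdec _ _ sg hts ht.
have : ball (1 : R) e t.
  rewrite /ball /= gtr0_norm ?subr_gt0 // ltrBlDl -ltrBlDr.
  have : 1 - e / 2 <= t by rewrite /t le_max lexx orbT.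
  apply: lt_le_trans; rewrite ltrD2l ltrN2.
  by rewrite ltr_pdivrMr // ltr_pMr // ltr1n.
move=> /He; rewrite h0 // sub0r normrN.
move=> hlt hle; move: hlt; rewrite ltr_norml => /andP [hh hh']; lra.
Qed.

Lemma eta_anti s s' : 0 <= s -> s <= s' -> 2^-1 <= s' -> eta s' <= eta s.
Proof.
move=> s0 ss' hs'; case: ceta => _ h1 hdec h0.
have s'0 : 0 <= s' by exact: le_trans ss'.
have [s'1|s'1] := lerP 1 s'; first by rewrite h0 // eta_ge0.
have [sl|sg] := lerP s (2^-1); first by rewrite (h1 s) ?s0 // eta_le1.
exact: hdec.
Qed.

End eta_lemmas.

Local Open Scope classical_set_scope.
Local Open Scope ring_scope.

Local Open Scope ring_scope.

Section real_lemmas.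
Variable R : realType.

Lemma eqle (x y : R) : x = y -> x <= y. Proof. by move->. Qed.

Lemma powRexp (a r : R) : 0 < a -> a `^ r = expR (r * ln a).
Proof. by move=> a0; rewrite /powR gt_eqF. Qed.

Lemma cvx (a b p : R) : 0 < a -> a <= b -> 1 < p ->
  (p - 1) * (b `^ (- p) * (b - a)) <= a `^ (1 - p) - b `^ (1 - p).
Proof.
move=> a0 ab p1; have b0 : 0 < b := lt_le_trans a0 ab.
have -> : b - a = expR (ln b) - expR (ln a) by rewrite !lnK ?posrE.
rewrite !powRexp //.
have AB : ln a <= ln b by rewrite ler_ln // posrE.
set A := ln a; set B := ln b; set y := A - B.
have e1 : expR ((1 - p) * A) = expR ((1 - p) * B) * expR ((1 - p) * y).
  by rewrite -expRD; congr expR; rewrite /y; ring.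
have e2 : expR (- p * B) * expR B = expR ((1 - p) * B).
  by rewrite -expRD; congr expR; ring.
have e3 : expR (- p * B) * expR A = expR ((1 - p) * B) * expR y.
  by rewrite -!expRD; congr expR; rewrite /y; ring.
rewrite mulrBr e2 e3 e1.
have E0 : 0 < expR ((1 - p) * B) := expR_gt0 _.
have h1 := expR_ge1Dx ((1 - p) * y).
have h2 := expR_ge1Dx y.
have y0 : y <= 0 by rewrite /y subr_le0.
have h3 : (p - 1) * (1 - expR y) <= expR ((1 - p) * y) - 1.
  have : (p - 1) * (1 - expR y) <= (p - 1) * (- y).
    apply: ler_wpM2l; first lra.
    lra.
  move=> h; apply: le_trans h _; lra.
have := ler_wpM2l (ltW E0) h3.
set E := expR ((1 - p) * B); set ey := expR y; set e1' := expR ((1 - p) * y).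
move=> h; apply: le_trans _ (le_trans h _); [apply: eqle; ring | apply: eqle; ring].
Qed.

Lemma ode (M : nat) (d L δ K p : R) (J W : nat -> R) :
  0 < d -> 0 < L -> 0 < δ -> 0 < K -> 1 < p ->
  (forall m, 0 <= J m) -> (forall m, 0 < W m) ->
  (forall m, (m < M)%N -> (δ + d / L * \sum_(j < m.+1) J j) `^ p * W m <= K * J m) ->
  (p - 1) * d * \sum_(m < M) W m <= K * L * δ `^ (1 - p).
Proof.
move=> d0 L0 δ0 K0 p1 J0 W0 hyp.
pose Z m := δ + d / L * \sum_(j < m) J j.
have Zpos m : δ <= Z m.
  rewrite /Z lerDl.
  apply: mulr_ge0; first by rewrite divr_ge0 ?ltW.
  by apply: sumr_ge0 => j _.
have key : forall M', (M' <= M)%N ->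
    (p - 1) * d * \sum_(m < M') W m <= K * L * (δ `^ (1 - p) - Z M' `^ (1 - p)).
  elim=> [|M' IH] hM.
    by rewrite big_ord0 mulr0 /Z big_ord0 mulr0 addr0 subrr mulr0.
  have hM' : (M' < M)%N by [].
  have := IH (ltnW hM'); rewrite big_ord_recr /= mulrDr.
  set a := Z M'; set b := Z M'.+1.
  have a0 : 0 < a := lt_le_trans δ0 (Zpos _).
  have ab : b - a = d / L * J M' by rewrite /b /a /Z big_ord_recr /=; ring.
  have abl : a <= b.
    by rewrite -subr_ge0 ab; apply: mulr_ge0 => //; rewrite divr_ge0 ?ltW.
  have hc := cvx a0 abl p1.
  have hb := hyp _ hM'; rewrite -/(Z M'.+1) -/b in hb.
  have b0 : 0 < b := lt_le_trans a0 abl.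
  have P0 : 0 < b `^ p := powR_gt0 _ b0.
  rewrite powRN in hc.
  set P := b `^ p in P0 hb hc.
  set Pi := P^-1 in hc.
  have PPi : P * Pi = 1 by rewrite /Pi mulfV // gt_eqF.
  rewrite ab in hc.
  have step : (p - 1) * d * W M' <= K * L * (a `^ (1 - p) - b `^ (1 - p)).
    have : (p - 1) * d * W M' = (p - 1) * d * Pi * (P * W M').
      by rewrite mulrA -[_ * Pi * P]mulrA (mulrC Pi) PPi mulr1.
    move=> ->.
    have Pi0 : 0 <= Pi by rewrite /Pi invr_ge0 ltW.
    apply: le_trans (ler_wpM2l _ hb) _.
      by apply: mulr_ge0 => //; apply: mulr_ge0; [rewrite subr_ge0 ltW | rewrite ltW].
    have : K * L * ((p - 1) * (Pi * (d / L * J M'))) <= K * L * (a `^ (1 - p) - b `^ (1 - p)).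
      by rewrite ler_wpM2l //; apply: mulr_ge0; apply: ltW.
    apply: le_trans; apply: eqle; rewrite /Pi; field.
    by rewrite !gt_eqF.
  move=> h; rewrite mulrDr; apply: le_trans (lerD h step) _; apply: eqle; ring.
have := key M (leqnn M); move/le_trans; apply.
apply: ler_wpM2l; first by apply: mulr_ge0; apply: ltW.
by rewrite gerBl powR_ge0.
Qed.
End real_lemmas.

Local Open Scope classical_set_scope.
Local Open Scope ring_scope.

Local Open Scope ring_scope.

Section count.
Variable R : realType.

Lemma count_bound (a b c dd : R) m : 0 < dd -> a <= b ->
  \sum_(j < m) (if (a < c + j.+1%:R * dd) && (c + j.+1%:R * dd <= b) then dd else 0)
  <= b - a + dd.
Proof.
move=> d0 ab.
pose S := fun m => \sum_(j < m) (if (a < c + j.+1%:R * dd) && (c + j.+1%:R * dd <= b) then dd else 0).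
change (S m <= b - a + dd).
suff : forall m, [/\ (c + m%:R * dd <= a -> S m = 0), S m <= b - a + dd &
                     (a < c + m%:R * dd -> S m <= c + m%:R * dd - a + dd)].
  by case/(_ m).
elim=> [|k [IH1 IH2 IH3]].
  rewrite /S big_ord0; split => //; lra.
have eS : S k.+1 = S k + (if (a < c + k.+1%:R * dd) && (c + k.+1%:R * dd <= b) then dd else 0).
  by rewrite /S big_ord_recr.
rewrite eS; have ek : c + k.+1%:R * dd = c + k%:R * dd + dd.
  by rewrite -addn1 natrD; ring.
rewrite ek; set x := c + k%:R * dd.
rewrite ek -/x in eS.
have [xa|xa] := lerP x a.
  rewrite IH1 // add0r; split.
  - by move=> h; rewrite ifF //; apply/negbTE; rewrite negb_and -leNgt h.
  - case: ifP => _; lra.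
  - case: ifP => _; lra.
have {}IH3 := IH3 xa.
move: IH3; rewrite -/x => IH3.
case: ifP => [/andP [h1 h2]|h]; split.
all: try (move=> ?); try (exfalso; lra); try lra.
Qed.

End count.

Section pointwise.
Variable R : realType.
Variables (N : nat) (C : set 'rV[R]_N) (eta : R -> R) (p alpha T : R).
Variable w : 'rV[R]_N -> R -> R.
Hypothesis ceta : cutoff eta.
Hypothesis p1 : 1 < p.
Hypothesis w0 : forall x t, C x -> 0 <= t < T -> 0 <= w x t.

Let e0 : 0 < 2 * conj_exp p.
Proof. by rewrite mulr_gt0 // /conj_exp divr_gt0 // ?subr_gt0 // (lt_trans ltr01). Qed.

Lemma hnn (x : 'rV[R]_N) t rm : rm < T ->
  0 <= (if (x, t) \in PR alpha rm C then w x t * psiR eta p alpha rm x t else 0).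
Proof.
move=> rmT; case: ifP => // /[1!in_setE] [[/= Cx [t0 ft]]].
apply: mulr_ge0; last exact: powR_ge0.
apply: w0 => //; rewrite t0 /=.
apply: le_lt_trans rmT; apply: le_trans ft; rewrite lerDr; exact: powR_ge0.
Qed.

Lemma gnn (x : 'rV[R]_N) t rm : rm < T ->
  0 <= (if (x, t) \in PR alpha rm C then w x t * psiR_star eta p alpha rm x t else 0).
Proof.
move=> rmT; case: ifP => // /[1!in_setE] [[/= Cx [t0 ft]]].
apply: mulr_ge0; last exact: powR_ge0.
apply: w0 => //; rewrite t0 /=.
apply: le_lt_trans rmT; apply: le_trans ft; rewrite lerDr; exact: powR_ge0.
Qed.

Lemma pt_bound (x : 'rV[R]_N) t (rj rm : R) : 0 < rj -> rj <= rm -> rm < T ->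
  (if (x, t) \in PR alpha rj C then w x t * psiR_star eta p alpha rj x t else 0)
   <= (if (jbr x `^ (2 - alpha) + t < rj) && (rj <= 2 * (jbr x `^ (2 - alpha) + t))
       then (if (x, t) \in PR alpha rm C then w x t * psiR eta p alpha rm x t else 0)
       else 0).
Proof.
move=> rj0 rjm rmT.
have H0 : 0 <= (if (jbr x `^ (2 - alpha) + t < rj) && (rj <= 2 * (jbr x `^ (2 - alpha) + t))
       then (if (x, t) \in PR alpha rm C then w x t * psiR eta p alpha rm x t else 0)
       else 0) by case: ifP => _ //; exact: hnn.
case: ifP => // /[1!in_setE] [[/= Cx [t0 ft]]].
set f := jbr x `^ (2 - alpha) + t in ft H0 *.
have f0 : 0 <= f by rewrite /f addr_ge0 // powR_ge0.
have wxt : 0 <= w x t.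
  by apply: w0 => //; rewrite t0 /=; apply: le_lt_trans rmT; apply: le_trans rjm;
     apply: le_trans ft; rewrite /f lerDr powR_ge0.
rewrite /psiR_star /psiR /sR -/f /eta_star.
set s := rj^-1 * f.
have s0 : 0 <= s by rewrite mulr_ge0 // invr_ge0 ltW.
have s1 : s <= 1 by rewrite /s ler_pdivrMl // mulr1.
have [sl|sg] := ltP s (2^-1).
  by rewrite powR0 ?mulr0 // gt_eqF.
have [fe|fne] := eqVneq f rj.
  have -> : s = 1 by rewrite /s fe mulVf // gt_eqF.
  by case: ceta => _ _ _ h0; rewrite h0 // powR0 ?mulr0 // gt_eqF.
have flt : f < rj by rewrite lt_neqAle fne ft.
have r2f : rj <= 2 * f.
  have e : rj * s = f by rewrite /s mulrA mulfV ?gt_eqF // mul1r.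
  have h : rj * 2^-1 <= rj * s by rewrite ler_pM2l.
  rewrite e in h; lra.
rewrite flt r2f /=.
have inm : (x, t) \in PR alpha rm C.
  by rewrite in_setE /=; split => //; split => //; apply: le_trans rjm.
rewrite inm ler_wpM2l //.
have rm0 : 0 < rm := lt_le_trans rj0 rjm.
apply: ge0_ler_powR; first exact: ltW e0.
- by rewrite nnegrE; apply: eta_ge0.
- by rewrite nnegrE; apply: eta_ge0 => //; rewrite mulr_ge0 // invr_ge0 ltW.
apply: eta_anti => //; first by rewrite mulr_ge0 // invr_ge0 ltW.
by rewrite /s ler_wpM2r // lef_pV2 // posrE.
Qed.

End pointwise.

Local Open Scope classical_set_scope.
Local Open Scope ring_scope.

Local Open Scope ring_scope.

Section more_real.
Variable R : realType.

Lemma geo_sum (a dd : R) M : 0 < a -> 0 <= dd ->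
  (expR (a * (M%:R * dd)) - 1) / a <= \sum_(m < M) dd * expR (a * (m.+1%:R * dd)).
Proof.
move=> a0 d0; elim: M => [|M IH].
  by rewrite big_ord0 mul0r mulr0 expR0 subrr mul0r.
rewrite big_ord_recr /=; apply: le_trans (lerD IH (lexx _)).
set E := expR (a * (M%:R * dd)).
have eS : expR (a * (M.+1%:R * dd)) = E * expR (a * dd).
  by rewrite /E -expRD; congr expR; rewrite -addn1 natrD; ring.
rewrite eS.
have h := expR_ge1Dx (- (a * dd)).
have e1 : expR (- (a * dd)) * expR (a * dd) = 1 by rewrite -expRD addNr expR0.
have E0 : 0 < E := expR_gt0 _.
have F0 : 0 < expR (a * dd) := expR_gt0 _.
set F := expR (a * dd) in e1 F0 *.
set G := expR (- (a * dd)) in h e1.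
have k1 : F * (1 - G) <= F * (a * dd) by apply: ler_wpM2l; [exact: ltW | lra].
rewrite mulrBr mulr1 (mulrC F G) e1 in k1.
have k2 : E * (F - 1) <= E * (a * dd * F).
  by apply: ler_wpM2l; [exact: ltW | apply: le_trans k1 _; apply: eqle; ring].
have k3 : E * (F - 1) / a <= dd * (E * F).
  rewrite ler_pdivrMr //; apply: le_trans k2 _; apply: eqle; ring.
apply: le_trans _ (lerD (lexx _) k3); apply: eqle; field; exact: lt0r_neq0.
Qed.

Lemma le_lim (x y c : R) : 0 <= c ->
  (forall M : nat, (0 < M)%N -> x <= y + c / M%:R) -> x <= y.
Proof.
move=> c0 h; rewrite leNgt; apply/negP => yx.
have xy0 : 0 < x - y by rewrite subr_gt0.
set M := (Num.truncn (c / (x - y))).+1.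
have hM := truncnS_gt (c / (x - y)); rewrite -/M in hM.
have M0 : (0 : R) < M%:R by rewrite ltr0n.
have := h M isT.
have : c / M%:R < x - y.
  by rewrite ltr_pdivrMr // mulrC -ltr_pdivrMr.
move=> h1 h2; lra.
Qed.

Lemma le_dense (T B R1 : R) : (forall T', R1 < T' < T -> T' <= B) -> R1 < T -> T <= B.
Proof.
move=> h R1T; rewrite leNgt; apply/negP => BT.
set m := Num.max B R1.
have m1 : R1 <= m by rewrite /m le_max lexx orbT.
have m2 : B <= m by rewrite /m le_max lexx.
have mT : m < T by rewrite /m gt_max BT R1T.
have : R1 < (m + T) / 2 < T.
  by apply/andP; split; [rewrite ltr_pdivlMr // | rewrite ltr_pdivrMr //]; lra.
move=> /h; lra.
Qed.

End more_real.

Local Open Scope classical_set_scope.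
Local Open Scope ring_scope.

Local Open Scope ring_scope.

Section core.
Variable R : realType.
Variables (N : nat) (C : set 'rV[R]_N) (eta : R -> R)
  (p alpha delta C0 R1 theta T : R) (w : 'rV[R]_N -> R -> R).
Hypothesis ceta : cutoff eta.
Hypothesis p1 : 1 < p.
Hypothesis δ0 : 0 < delta.
Hypothesis C00 : 0 < C0.
Hypothesis R10 : 0 < R1.
Hypothesis θ0 : 0 <= theta.
Hypothesis R1T : R1 < T.
Hypothesis w0 : forall x t, C x -> 0 <= t < T -> 0 <= w x t.
Hypothesis wfin : forall T', 0 < T' < T ->
     (iint [set z : 'rV[R]_N * R | C z.1 /\ (0 <= z.2 <= T')%R] w < +oo)%E.
Hypothesis hyp : forall Rr, R1 <= Rr < T ->
     (delta%:E + iint (PR alpha Rr C) (fun x t => (w x t * psiR eta p alpha Rr x t)%R)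
      <= (C0 * Rr `^ (- (theta / conj_exp p)))%R%:E *
         (iint (PR alpha Rr C) (fun x t => (w x t * psiR_star eta p alpha Rr x t)%R))
           `^ (p^-1)%R)%E.

Lemma iint_E (D : set ('rV[R]_N * R)) (f : 'rV[R]_N -> R -> R) :
  iint D f = Iint (fun u t => (if (tup2row u, t) \in D then f (tup2row u) t else 0)%:E).
Proof.
rewrite /iint /Iint; congr integral; apply: funext => t; congr lebN; apply: funext => u.
by case: ifP.
Qed.

Lemma eta_star_01 s : 0 <= eta_star eta s <= 1.
Proof.
rewrite /eta_star; case: ifP => [_|/negbT]; first by rewrite lexx ler01.
rewrite -leNgt => hs; have s0 : 0 <= s by apply: le_trans hs; rewrite invr_ge0.
by rewrite eta_ge0 // eta_le1.
Qed.

Let e0 : 0 < 2 * conj_exp p.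
Proof. by rewrite mulr_gt0 // /conj_exp divr_gt0 // ?subr_gt0 // (lt_trans ltr01). Qed.

Lemma psi_star_le1 rr (x : 'rV[R]_N) t : psiR_star eta p alpha rr x t <= 1.
Proof.
rewrite /psiR_star; have /andP [h0 h1] := eta_star_01 (sR alpha rr x t).
have := ge0_ler_powR (ltW e0) _ _ h1; rewrite powR1; apply => //; by rewrite nnegrE.
Qed.

Lemma J_fin rr : 0 < rr < T ->
  (0 <= iint (PR alpha rr C) (fun x t => (w x t * psiR_star eta p alpha rr x t)%R) < +oo)%E.
Proof.
case/andP => r0 rT; apply/andP; split.
  rewrite iint_E; apply: Iint_ge0 => u t; rewrite lee_fin.
  have HH := (gnn eta p alpha w0 (tup2row u) t rT).
  exact HH.
apply: le_lt_trans (wfin (T' := rr) _); last by rewrite r0.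
rewrite !iint_E; apply: Iint_mono => u t; first by rewrite lee_fin; exact: (gnn eta p alpha w0 (tup2row u) t rT).
rewrite lee_fin; case: ifP => [|_].
  rewrite in_setE => -[/= Cx [t0 ft]].
  have ft' : t <= rr by apply: le_trans ft; rewrite lerDr powR_ge0.
  have wt : 0 <= w (tup2row u) t by apply: w0 => //; rewrite t0 /=; exact: le_lt_trans rT.
  have hin : (tup2row u, t) \in [set z : 'rV[R]_N * R | C z.1 /\ (0 <= z.2 <= rr)%R].
    by rewrite in_setE /=; split => //; rewrite t0.
  rewrite hin; apply: ler_piMr => //; exact: psi_star_le1.
case: ifP => //; rewrite in_setE => -[/= Cx /andP [t0 tr]].
by apply: w0 => //; rewrite t0 /=; exact: le_lt_trans rT.
Qed.

Lemma ln2_gt0 : 0 < ln (2 : R).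
Proof. by rewrite ln_gt0 // ltr1n. Qed.

Lemma pt_sum (dd : R) (m : nat) (x : 'rV[R]_N) t : 0 < dd ->
  R1 * expR (m.+1%:R * dd) < T ->
  \sum_(0 <= j < m.+1) (dd / (ln 2 + dd)) *
     (if (x, t) \in PR alpha (R1 * expR (j.+1%:R * dd)) C
      then w x t * psiR_star eta p alpha (R1 * expR (j.+1%:R * dd)) x t else 0)
  <= (if (x, t) \in PR alpha (R1 * expR (m.+1%:R * dd)) C
      then w x t * psiR eta p alpha (R1 * expR (m.+1%:R * dd)) x t else 0).
Proof.
move=> d0 rT.
pose r := fun j : nat => R1 * expR (j%:R * dd).
rewrite -/(r m.+1) in rT *.
set L := ln 2 + dd.
set h := (if _ \in PR alpha (r m.+1) C then _ else _).
set f := jbr x `^ (2 - alpha) + t.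
have L0 : 0 < L by rewrite /L addr_gt0 // ln2_gt0.
have h0 : 0 <= h := hnn eta p alpha w0 x t rT.
have rpos j : 0 < r j by rewrite /r mulr_gt0 // expR_gt0.
have rle j : (j <= m.+1)%N -> r j <= r m.+1.
  by move=> hj; rewrite /r ler_pM2l // ler_expR ler_pM2r // ler_nat.
have k0 : 0 <= dd / L by rewrite divr_ge0 ?ltW.
have step1 : \sum_(0 <= j < m.+1) (dd / L) *
     (if (x, t) \in PR alpha (r j.+1) C
      then w x t * psiR_star eta p alpha (r j.+1) x t else 0) <= \sum_(0 <= j < m.+1)
   (if (f < r j.+1) && (r j.+1 <= 2 * f) then dd else 0) * (h / L).
  apply: ler_sum_nat => j /andP [_ hj].
  have hb := pt_bound alpha ceta p1 w0 x t (rpos j.+1) (rle j.+1 hj) rT.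
  rewrite -/f in hb.
  apply: le_trans (ler_wpM2l k0 hb) _.
  by case: ifP => _; apply: eqle; rewrite ?mulr0 ?mul0r //; rewrite /h; field; rewrite gt_eqF.
apply: le_trans step1 _.
rewrite -mulr_suml.
suff hs : \sum_(0 <= j < m.+1) (if (f < r j.+1) && (r j.+1 <= 2 * f) then dd else 0) <= L.
  apply: le_trans (ler_wpM2r _ hs) _; first by rewrite divr_ge0 // ltW.
  by apply: eqle; rewrite mulrC divfK // gt_eqF.
have [fle|fgt] := lerP f 0.
  rewrite big1 ?ltW // => j _; rewrite ifF //; apply/negbTE; rewrite negb_and.
  by apply/orP; right; rewrite -ltNge; apply: le_lt_trans (rpos j.+1); rewrite pmulr_rle0.
rewrite big_mkord.
have -> : \sum_(j < m.+1) (if (f < r j.+1) && (r j.+1 <= 2 * f) then dd else 0) =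
   \sum_(j < m.+1) (if (ln f < ln R1 + j.+1%:R * dd) && (ln R1 + j.+1%:R * dd <= ln 2 + ln f)
                   then dd else 0).
  apply: eq_bigr => j _.
  have lr : ln (r j.+1) = ln R1 + j.+1%:R * dd.
    by rewrite /r lnM ?posrE ?expR_gt0 // expRK.
  have e1 : (f < r j.+1) = (ln f < ln R1 + j.+1%:R * dd).
    by rewrite -lr ltr_ln ?posrE.
  have e2 : (r j.+1 <= 2 * f) = (ln R1 + j.+1%:R * dd <= ln 2 + ln f).
    by rewrite -lr -lnM ?posrE // ler_ln ?posrE // mulr_gt0.
  by rewrite e1 e2.
have ab : ln f <= ln 2 + ln f by rewrite lerDr ltW // ln2_gt0.
apply: le_trans (count_bound _ _ d0 ab) _.
by apply: eqle; rewrite /L; ring.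
Qed.

Lemma core (T' : R) (M : nat) : R1 < T' < T -> (0 < M)%N ->
  (p - 1) * (ln (T' / R1) / M%:R) *
    \sum_(m < M) (R1 * expR (m.+1%:R * (ln (T' / R1) / M%:R))) `^ (theta * (p - 1))
  <= C0 `^ p * (ln 2 + ln (T' / R1) / M%:R) * delta `^ (1 - p).
Proof.
case/andP => R1T' T'T M0.
set dd := ln (T' / R1) / M%:R.
pose r := fun j : nat => R1 * expR (j%:R * dd).
have M0' : (0 : R) < M%:R by rewrite ltr0n.
have T'0 : 0 < T' := lt_trans R10 R1T'.
have d0 : 0 < dd.
  by rewrite /dd divr_gt0 // ln_gt0 // ltr_pdivlMr // mul1r.
have rpos j : 0 < r j by rewrite /r mulr_gt0 // expR_gt0.
have rM : r M = T'.
  rewrite /r /dd [M%:R * _]mulrC divfK ?gt_eqF // lnK ?posrE ?divr_gt0 //.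
  by rewrite mulrC divfK // gt_eqF.
have rle i j : (i <= j)%N -> r i <= r j.
  by move=> hj; rewrite /r ler_pM2l // ler_expR ler_pM2r // ler_nat.
have rT j : (j <= M)%N -> r j < T.
  by move=> hj; apply: le_lt_trans T'T; rewrite -rM rle.
have R1r j : R1 <= r j.
  by have := rle 0%N j isT; rewrite /r mul0r expR0 mulr1.
pose Jr := fun j => if (j < M)%N then fine (iint (PR alpha (r j.+1) C)
                   (fun x t => (w x t * psiR_star eta p alpha (r j.+1) x t)%R)) else 0.
have JE j : (j < M)%N -> (Jr j)%:E = iint (PR alpha (r j.+1) C)
                   (fun x t => (w x t * psiR_star eta p alpha (r j.+1) x t)%R).
  move=> hj; rewrite /Jr hj fineK //.
  have /andP [h0 h1] := J_fin (rr := r j.+1) (introT andP (conj (rpos _) (rT _ hj))).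
  by rewrite ge0_fin_numE.
have J0 j : 0 <= Jr j.
  rewrite /Jr; case: ifP => // hj.
  apply: fine_ge0; rewrite iint_E; apply: Iint_ge0 => u t; rewrite lee_fin.
  exact: (gnn eta p alpha w0 (tup2row u) t (rT _ hj)).
have L0 : 0 < ln 2 + dd by rewrite addr_gt0 // ln2_gt0.
apply: (ode (J := Jr) (W := fun m => r m.+1 `^ (theta * (p - 1)))) => //.
- exact: powR_gt0.
- by move=> m; apply: powR_gt0.
move=> m hm.
set ρ := r m.+1.
have ρT : ρ < T := rT _ hm.
have hρ := hyp (introT andP (conj (R1r m.+1) ρT)).
rewrite -(JE m hm) poweR_EFin -EFinM in hρ.
set Iρ := iint (PR alpha ρ C) _ in hρ.
have I0 : (0 <= Iρ)%E.
  rewrite /Iρ iint_E; apply: Iint_ge0 => u t; rewrite lee_fin.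
  exact: (hnn eta p alpha w0 (tup2row u) t ρT).
have [Ir IE] : exists Ir, Iρ = Ir%:E.
  move: I0 hρ; case: Iρ => [Ir _ _| _ //|//]; first by exists Ir.
rewrite IE -EFinD lee_fin in hρ.
set k := dd / (ln 2 + dd).
have k0 : 0 <= k by rewrite divr_ge0 ?ltW.
pose g := fun (j : nat) (x : 'rV[R]_N) t =>
  if (x, t) \in PR alpha (r j.+1) C then w x t * psiR_star eta p alpha (r j.+1) x t else 0.
have gnn' j u t : (j < M)%N -> 0 <= g j (tup2row u) t.
  by move=> hj; exact: (gnn eta p alpha w0 (tup2row u) t (rT _ hj)).
have hint : k * \sum_(j < m.+1) Jr j <= Ir.
  rewrite -lee_fin -IE mulr_sumr -sumEFin.
  rewrite -(big_mkord xpredT (fun j => (k * Jr j)%:E)).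
  have step1 : (\sum_(0 <= j < m.+1) (k * Jr j)%:E <=
      \sum_(0 <= j < m.+1) Iint (fun u t => k%:E * (g j (tup2row u) t)%:E))%E.
    rewrite big_nat_cond [X in (_ <= X)%E]big_nat_cond.
    apply: lee_sum => j /andP [/andP [_ hj] _].
    have hjM : (j < M)%N by apply: leq_trans hm.
    rewrite EFinM JE // iint_E.
    by apply: Iint_scale => // u t; rewrite lee_fin; apply: gnn'.
  apply: le_trans step1 _.
  have hnn2 : forall j (u : N.-tuple R) t, j \in index_iota 0 m.+1 ->
      (0 <= k%:E * (g j (tup2row u) t)%:E)%E.
    move=> j u t; rewrite mem_index_iota => /andP [_ hj].
    by rewrite mule_ge0 // lee_fin; apply: gnn'; apply: leq_trans hm.
  apply: le_trans (Iint_sum hnn2) _.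
  rewrite /Iρ iint_E; apply: Iint_mono.
    move=> u t; rewrite big_seq; apply: sume_ge0 => j; rewrite mem_index_iota => /andP [_ hj].
    by rewrite mule_ge0 // lee_fin; apply: gnn'; apply: leq_trans hm.
  move=> u t.
  rewrite (eq_bigr (fun j => (k * g j (tup2row u) t)%:E)); last by move=> j _; rewrite EFinM.
  rewrite sumEFin lee_fin; exact: pt_sum.
have p0 : 0 < p := lt_trans ltr01 p1.
set y := delta + k * \sum_(j < m.+1) Jr j.
have y0 : 0 <= y.
  apply: addr_ge0; first exact: ltW.
  by apply: mulr_ge0 => //; apply: sumr_ge0 => j _; exact: J0.
set Q := C0 * ρ `^ (- (theta / conj_exp p)) * Jr m `^ p^-1 in hρ.
have Q0 : 0 <= Q.
  by apply: mulr_ge0; [apply: mulr_ge0; [exact: ltW | exact: powR_ge0] | exact: powR_ge0].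
have yQ : y <= Q by apply: le_trans hρ; rewrite lerD2l.
have hp := ge0_ler_powR (ltW p0) y0 Q0 yQ.
have eQ : Q `^ p = C0 `^ p * ρ `^ (- (theta / conj_exp p) * p) * Jr m.
  rewrite /Q powRM; last 2 first.
  - by apply: mulr_ge0; [exact: ltW | exact: powR_ge0].
  - exact: powR_ge0.
  rewrite powRM; last 2 first.
  - exact: ltW.
  - exact: powR_ge0.
  by rewrite -!powRrM mulVf ?gt_eqF // powRr1.
have eρ : ρ `^ (- (theta / conj_exp p) * p) * ρ `^ (theta * (p - 1)) = 1.
  rewrite -powRD; last by apply/implyP => _; rewrite gt_eqF //; apply: rpos.
  have -> : - (theta / conj_exp p) * p + theta * (p - 1) = 0.
    rewrite /conj_exp; field.
    by rewrite subr_eq0 !gt_eqF.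
  exact: powRr0.
rewrite eQ in hp.
apply: le_trans (ler_wpM2r (powR_ge0 _ _) hp) _.
apply: eqle.
set A := ρ `^ (- (theta / conj_exp p) * p) in eρ *.
set B := ρ `^ (theta * (p - 1)) in eρ *.
transitivity (C0 `^ p * Jr m * (A * B)); first by ring.
by rewrite eρ mulr1.
Qed.

End core.

Local Open Scope classical_set_scope.
Local Open Scope ring_scope.

Local Open Scope ring_scope.

Section final.
Variable R : realType.

Lemma dd_eq (T' R1 : R) (M : nat) : 0 < R1 -> 0 < T' -> (0 < M)%N ->
  M%:R * (ln (T' / R1) / M%:R) = ln T' - ln R1.
Proof.
move=> R10 T0 M0; rewrite mulrC divfK ?gt_eqF ?ltr0n //.
by rewrite lnM ?posrE ?invr_gt0 // lnV ?posrE.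
Qed.

End final.


Unset Implicit Arguments. Set Strict Implicit.


Theorem lemma3p13 (R : realType) (N : nat) (C : set 'rV[R]_N) (eta : R -> R)
  (p alpha delta C0 R1 theta T : R) (w : 'rV[R]_N -> R -> R) :
  cone_domain C -> cutoff eta ->
  1 < p -> 0 <= alpha <= 1 ->
  0 < delta -> 0 < C0 -> 0 < R1 -> 0 <= theta -> R1 < T ->
  (* 0 <= w in L^1_loc([0,T); L^1(C_Sigma)) *)
  (forall x t, C x -> 0 <= t < T -> 0 <= w x t) ->
  measurable_fun [set z : N.-tuple R * R | C (tup2row z.1) /\ 0 <= z.2 < T]
    (fun z => w (tup2row z.1) z.2) ->
  (forall T', 0 < T' < T ->
     (iint [set z : 'rV[R]_N * R | C z.1 /\ (0 <= z.2 <= T')%R] w < +oo)%E) ->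
  (forall Rr, R1 <= Rr < T ->
     (delta%:E + iint (PR alpha Rr C) (fun x t => (w x t * psiR eta p alpha Rr x t)%R)
      <= (C0 * Rr `^ (- (theta / conj_exp p)))%R%:E *
         (iint (PR alpha Rr C) (fun x t => (w x t * psiR_star eta p alpha Rr x t)%R))
           `^ (p^-1)%R)%E) ->
  (0 < theta ->
     T <= (R1 `^ ((p - 1) * theta)
           + ln 2 * C0 `^ p * theta * delta `^ (- (p - 1))) `^ (((p - 1) * theta)^-1)) /\
  (theta = 0 ->
     T <= expR (ln R1 + ln 2 * (p - 1)^-1 * C0 `^ p * delta `^ (- (p - 1)))).
Proof.
move=> _ ceta p1 _ δ0 C00 R10 θ0 R1T w0 _ wfin hyp.
have cr := core ceta p1 δ0 C00 R10 w0 wfin hyp.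
have P0 : 0 < p - 1 by rewrite subr_gt0.
have e1p : 1 - p = - (p - 1) by rewrite opprB.
have Kc0 : 0 < C0 `^ p * delta `^ (- (p - 1)) by rewrite mulr_gt0 // powR_gt0.
have lT'0 : forall T', R1 < T' -> 0 <= ln (T' / R1).
  by move=> T' h; rewrite ln_ge0 // ler_pdivlMr // mul1r ltW.
split.
- move=> θpos.
  set a := (p - 1) * theta.
  have a0 : 0 < a by rewrite mulr_gt0.
  set K0 := R1 `^ a + ln 2 * C0 `^ p * theta * delta `^ (- (p - 1)).
  have K00 : 0 <= K0.
    apply: addr_ge0; first exact: powR_ge0.
    apply: mulr_ge0; last exact: powR_ge0.
    apply: mulr_ge0; last exact: θ0.
    by apply: mulr_ge0; [apply: ltW; apply: ln2_gt0 | exact: powR_ge0].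
  apply: le_dense R1T => T' /andP [R1T' T'T].
  have T'0 : 0 < T' := lt_trans R10 R1T'.
  have hTa : T' `^ a <= K0.
    apply: (le_lim (c := theta * (C0 `^ p * delta `^ (- (p - 1))) * ln (T' / R1))).
      by apply: mulr_ge0; [apply: mulr_ge0; [exact: θ0 | exact: ltW Kc0] | exact: lT'0].
    move=> M M0.
    have := cr T' M (introT andP (conj R1T' T'T)) M0.
    set dd := ln (T' / R1) / M%:R.
    have ea : theta * (p - 1) = a by rewrite /a mulrC.
    rewrite ea e1p => hc.
    have d0 : 0 <= dd by rewrite /dd divr_ge0 ?lT'0 // ler0n.
    have hsum : \sum_(m < M) (R1 * expR (m.+1%:R * dd)) `^ a =
        R1 `^ a * \sum_(m < M) expR (a * (m.+1%:R * dd)).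
      rewrite mulr_sumr; apply: eq_bigr => m _.
      rewrite powRM ?ltW ?expR_gt0 // -expRM; congr (_ * expR _); exact: mulrC.
    rewrite hsum in hc.
    have hg := geo_sum M a0 d0.
    set X := R1 `^ a in hc *.
    set Es := \sum_(m < M) expR (a * (m.+1%:R * dd)) in hc *.
    set E := expR (a * (M%:R * dd)) in hg.
    have eE : X * E = T' `^ a.
      rewrite /X /E /dd dd_eq // mulrBr expRD expRN -!powRexp //.
      by rewrite mulrC divfK // gt_eqF // powR_gt0.
    have h1 : E - 1 <= a * (dd * Es).
      by move: hg; rewrite -mulr_sumr ler_pdivrMr // mulrC.
    have h2 : X * (E - 1) <= X * (a * (dd * Es)) := ler_wpM2l (powR_ge0 _ _) h1.
    have h3 := ler_wpM2l θ0 hc.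
    have e4 : X * (a * (dd * Es)) = theta * ((p - 1) * dd * (X * Es)) by rewrite /a; ring.
    rewrite e4 in h2; rewrite -eE.
    have e5 : K0 + theta * (C0 `^ p * delta `^ (- (p - 1))) * ln (T' / R1) / M%:R =
        X + theta * (C0 `^ p * (ln 2 + dd) * delta `^ (- (p - 1))) by rewrite /K0 /dd /X; ring.
    rewrite e5; lra.
  have -> : T' = (T' `^ a) `^ a^-1 by rewrite -powRrM mulfV ?gt_eqF // powRr1 // ltW.
  apply: ge0_ler_powR => //; first by rewrite invr_ge0 ltW.
  by rewrite nnegrE powR_ge0.
- move=> eθ; rewrite eθ in cr.
  set K1 := ln R1 + ln 2 * (p - 1)^-1 * C0 `^ p * delta `^ (- (p - 1)).
  apply: le_dense R1T => T' /andP [R1T' T'T].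
  have T'0 : 0 < T' := lt_trans R10 R1T'.
  have hl : ln T' <= K1.
    apply: (le_lim (c := (p - 1)^-1 * (C0 `^ p * delta `^ (- (p - 1))) * ln (T' / R1))).
      by apply: mulr_ge0; [apply: mulr_ge0; [rewrite invr_ge0 ltW | exact: ltW Kc0] | exact: lT'0].
    move=> M M0.
    have := cr T' M (introT andP (conj R1T' T'T)) M0.
    set dd := ln (T' / R1) / M%:R.
    rewrite mul0r (eq_bigr (fun=> 1)); last by move=> m _; rewrite powRr0.
    rewrite sumr_const card_ord e1p => hc.
    have e : (p - 1) * dd * (1 *+ M) = (p - 1) * (ln T' - ln R1).
      by rewrite -(dd_eq R10 T'0 M0) /dd -mulr_natl; ring.
    rewrite e in hc.
    have h : ln T' - ln R1 <= (p - 1)^-1 * (C0 `^ p * (ln 2 + dd) * delta `^ (- (p - 1))).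
      rewrite -(ler_pM2l P0) mulrA mulfV ?gt_eqF // mul1r; exact: hc.
    have e5 : K1 + (p - 1)^-1 * (C0 `^ p * delta `^ (- (p - 1))) * ln (T' / R1) / M%:R =
        ln R1 + (p - 1)^-1 * (C0 `^ p * (ln 2 + dd) * delta `^ (- (p - 1))) by rewrite /K1 /dd; ring.
    rewrite e5; lra.
  have -> : T' = expR (ln T') by rewrite lnK // posrE.
  by rewrite ler_expR.
Qed.
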